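(* Let $S$ be a finite poset which contains a subposet (with induced order) isomorphic to $V$ but no subposet isomorphic to $W^4$. Then $C(f_S)\ne\varnothing$.
   Context: $f_S(x)=\sum_i x_i^2+\sum_{s_i<s_j}x_ix_j$. $H_n=\{x:\sum x_i=0\}$; $C(f)$ is the set of $h\in H_n\setminus\{0\}$ with either all $\partial f/\partial x_i(h)\le0$ or all $\ge0$. $V=\{h^-,h_1,h_2,h^+\}$ with $h^-<h_1<h^+$, $h^-<h_2<h^+$, $h_1,h_2$ incomparable. $W^4=\{a_1,a_2,b_1,b_2\}$ with only strict relations $a_1<b_1$, $a_1<b_2$, $a_2<b_1$, $a_2<b_2$. *)

(* Defs.v *)
From HB Require Import structures.
From mathcomp Require Import all_boot all_order all_algebra.
From mathcomp Require Import reals.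
Set Implicit Arguments. Unset Strict Implicit. Unset Printing Implicit Defensive.
Import Order.TTheory GRing.Theory Num.Theory.
Local Open Scope ring_scope.

Section PosetForm.
Variables (R : realType) (d : Order.disp_t) (S : finPOrderType d).

Definition fS (x : S -> R) : R :=
  \sum_(i : S) x i ^+ 2 + \sum_(i : S) \sum_(j : S | (i < j)%O) x i * x j.

(* partial derivative of f_S w.r.t. x_i (explicit, as f_S is quadratic):
   2 x_i + sum over j comparable and distinct from i of x_j *)
Definition dfS (x : S -> R) (i : S) : R :=
  2 * x i + \sum_(j : S | (i < j)%O || (j < i)%O) x j.

Definition inH (h : S -> R) : Prop := \sum_(i : S) h i = 0.

Definition CfS (h : S -> R) : Prop :=
  inH h /\ (exists i, h i != 0) /\
  ((forall i, dfS h i <= 0) \/ (forall i, 0 <= dfS h i)).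

End PosetForm.

(* V on 'I_4: 0 = h^-, 1 = h_1, 2 = h_2, 3 = h^+ (strict relations) *)
Definition Vlt (a b : 'I_4) : bool :=
  [|| (a == 0 :> nat) && (b == 1 :> nat), (a == 0 :> nat) && (b == 2 :> nat),
      (a == 0 :> nat) && (b == 3 :> nat), (a == 1 :> nat) && (b == 3 :> nat)
    | (a == 2 :> nat) && (b == 3 :> nat)].

(* W^4 on 'I_4: 0 = a_1, 1 = a_2, 2 = b_1, 3 = b_2 (strict relations) *)
Definition Wlt (a b : 'I_4) : bool :=
  ((a == 0 :> nat) || (a == 1 :> nat)) && ((b == 2 :> nat) || (b == 3 :> nat)).

Definition has_subposet d (S : finPOrderType d) (P : rel 'I_4) : Prop :=
  exists g : 'I_4 -> S, injective g /\ forall a b, (g a < g b)%O = P a b.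

(* Main.v *)
Require Import Defs.
From HB Require Import structures.
From mathcomp Require Import all_boot all_order all_algebra.
From mathcomp Require Import reals.
From mathcomp Require Import lra.
Set Implicit Arguments. Unset Strict Implicit. Unset Printing Implicit Defensive.
Import Order.TTheory GRing.Theory Num.Theory.
Local Open Scope ring_scope.

Section Aux.
Variables (R : realType) (d : Order.disp_t) (S : finPOrderType d).

Lemma sum_ind (P : pred S) (a : S) :
  \sum_(j | P j) (((j == a)%:R) : R) = (P a)%:R.
Proof.
rewrite big_mkcond (bigD1 a) //= eqxx big1 ?addr0.
  by case: (P a).
by move=> j /negbTE ->; case: (P j).
Qed.

Lemma sum_ind1 (a : S) : \sum_(j : S) (((j == a)%:R) : R) = 1.
Proof.
rewrite (bigD1 a) //= eqxx big1 ?addr0 //.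
by move=> j /negbTE ->.
Qed.

Lemma mkW (a1 a2 b1 b2 : S) :
  (a1 < b1)%O -> (a1 < b2)%O -> (a2 < b1)%O -> (a2 < b2)%O ->
  a1 != a2 -> ~~ (a1 < a2)%O -> ~~ (a2 < a1)%O ->
  b1 != b2 -> ~~ (b1 < b2)%O -> ~~ (b2 < b1)%O ->
  has_subposet S Wlt.
Proof.
move=> l11 l12 l21 l22 na na1 na2 nb nb1 nb2.
pose g (k : 'I_4) : S :=
  match val k with 0 => a1 | 1 => a2 | 2 => b1 | _ => b2 end.
have nab : forall a b : S, (a < b)%O -> (a == b) = false.
  by move=> a b /lt_eqF.
have nlt : forall a b : S, (a < b)%O -> (b < a)%O = false.
  by move=> a b /lt_geF; rewrite le_eqVlt orbC => /norP [/negbTE].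
exists g; split.
  move=> k l /eqP; apply: contraTeq => nkl; rewrite /g.
  move: k l nkl => [[|[|[|[|k]]]] Hk] [[|[|[|[|l]]]] Hl] //= nkl;
  have e1 := nab _ _ l11; have e2 := nab _ _ l12; have e3 := nab _ _ l21;
  have e4 := nab _ _ l22; have e5 := negbTE na; have e6 := negbTE nb;
  rewrite ?e1 ?e2 ?e3 ?e4 ?e5 ?e6 // eq_sym ?e1 ?e2 ?e3 ?e4 ?e5 ?e6 //.
move=> [[|[|[|[|k]]]] Hk] [[|[|[|[|l]]]] Hl] //=; rewrite /g /= /Wlt /= ?ltxx //;
  rewrite ?l11 ?l12 ?l21 ?l22 ?(negbTE na1) ?(negbTE na2) ?(negbTE nb1) ?(negbTE nb2) //;
  by rewrite nlt.
Qed.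

End Aux.

Lemma boolfact (a1 b1 a2 b2 a0 b0 a3 b3 : bool) :
  (a1 ==> a0) -> (a2 ==> a0) -> (b1 ==> b3) -> (b2 ==> b3) ->
  ~~ (a1 && b2) -> ~~ (a2 && b1) -> (a1 && a2 ==> (b3 || a3)) ->
  (b1 && b2 ==> (b0 || a0)) ->
  ((b1 || a1) + (b2 || a2) <= (b0 || a0) + (b3 || a3))%N.
Proof. by case: a1; case: b1; case: a2; case: b2; case: a0; case: b0; case: a3; case: b3. Qed.

Theorem lemma9 (R : realType) (d : Order.disp_t) (S : finPOrderType d) :
  has_subposet S Vlt -> ~ has_subposet S Wlt ->
  exists h : S -> R, CfS h.
Proof.
move=> [g [ginj hV]] noW.
pose o0 : 'I_4 := @Ordinal 4 0 isT. pose o1 : 'I_4 := @Ordinal 4 1 isT.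
pose o2 : 'I_4 := @Ordinal 4 2 isT. pose o3 : 'I_4 := @Ordinal 4 3 isT.
pose h (x : S) : R := ((x == g o1)%:R + (x == g o2)%:R) - ((x == g o0)%:R + (x == g o3)%:R).
have gE : forall k l, (g k == g l) = (k == l) by move=> k l; exact: inj_eq.
have dE : forall i, dfS h i = 2 * h i +
   ((((i < g o1) || (g o1 < i))%O)%:R + (((i < g o2) || (g o2 < i))%O)%:R
    - ((((i < g o0) || (g o0 < i))%O)%:R + (((i < g o3) || (g o3 < i))%O)%:R)).
  by move=> i; rewrite /dfS sumrB !big_split /= !sum_ind.
exists h; split; [|split].
- by rewrite /inH sumrB !big_split /= !sum_ind1 subrr.
- by exists (g o1); rewrite /h !gE /=; apply/eqP; lra.
left=> i; rewrite dE.
case: (boolP (i == g o0)) => [/eqP ->|n0].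
  by rewrite /h !gE !hV /=; lra.
case: (boolP (i == g o1)) => [/eqP ->|n1].
  by rewrite /h !gE !hV /=; lra.
case: (boolP (i == g o2)) => [/eqP ->|n2].
  by rewrite /h !gE !hV /=; lra.
case: (boolP (i == g o3)) => [/eqP ->|n3].
  by rewrite /h !gE !hV /=; lra.
have -> : h i = 0 by rewrite /h (negbTE n0) (negbTE n1) (negbTE n2) (negbTE n3) /=; lra.
have l01 : (g o0 < g o1)%O by rewrite hV.
have l02 : (g o0 < g o2)%O by rewrite hV.
have l13 : (g o1 < g o3)%O by rewrite hV.
have l23 : (g o2 < g o3)%O by rewrite hV.
have t1 : (g o1 < i)%O -> (g o0 < i)%O by apply: lt_trans.
have t2 : (g o2 < i)%O -> (g o0 < i)%O by apply: lt_trans.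
have t3 : (i < g o1)%O -> (i < g o3)%O by move=> H; apply: lt_trans H l13.
have t4 : (i < g o2)%O -> (i < g o3)%O by move=> H; apply: lt_trans H l23.
have n12 : ~~ (g o1 < g o2)%O by rewrite hV.
have n21 : ~~ (g o2 < g o1)%O by rewrite hV.
have x1 : (g o1 < i)%O -> (i < g o2)%O -> False.
  by move=> H1 H2; move: n12; rewrite (lt_trans H1 H2).
have x2 : (g o2 < i)%O -> (i < g o1)%O -> False.
  by move=> H1 H2; move: n21; rewrite (lt_trans H1 H2).
have e12 : g o1 != g o2 by rewrite gE.
have e03 : g o0 != g o3 by rewrite gE.
have w1 : (g o1 < i)%O -> (g o2 < i)%O -> (i < g o3)%O || (g o3 < i)%O.
  move=> H1 H2; apply/negPn/negP; rewrite negb_or => /andP [c1 c2].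
  apply: noW; apply: (@mkW _ _ (g o1) (g o2) (g o3) i) => //.
  by rewrite eq_sym.
have w2 : (i < g o1)%O -> (i < g o2)%O -> (i < g o0)%O || (g o0 < i)%O.
  move=> H1 H2; apply/negPn/negP; rewrite negb_or => /andP [c1 c2].
  apply: noW; apply: (@mkW _ _ (g o0) i (g o1) (g o2)) => //.
  by rewrite eq_sym.
rewrite mulr0 add0r subr_le0 -!natrD ler_nat.
apply: boolfact.
- exact/implyP.
- exact/implyP.
- exact/implyP.
- exact/implyP.
- by apply/negP => /andP [H1 H2]; apply: x1.
- by apply/negP => /andP [H1 H2]; apply: x2.
- by apply/implyP => /andP [H1 H2]; exact: w1.
- by apply/implyP => /andP [H1 H2]; exact: w2.
Qed.
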